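(* Let $\mathcal F=\{g\}\cup\{f_p:p\text{ prime}\}$, where $g$ and $f_p$ are the implicit operations of $\mathsf{RCR}$ defined by $\mathsf{inv}(x,y)=(x^2y\approx x)\wedge(xy^2\approx y)$ and $\exists\mathsf{root}_p(x,y)=\exists z\,(\mathsf{inv}(p,z)\wedge y^p\approx(1-zp)x)$ respectively. Then the pp expansion of $\mathsf{RCR}$ induced by $\mathcal F$ is simple and coincides with $\mathsf{ICM}=\mathsf{RCR}[\mathscr L_{\mathcal F}]$ (identifying the new symbol for $g$ with $(\,)^*$ and that for $f_p$ with $r_p$).
   Context: Rings are unital in the language $\{+,\cdot,-,0,1\}$; $\mathsf{RCR}$ is the quasivariety of reduced commutative rings. A field is weakly rooted if it has characteristic $0$, or prime characteristic $p$ with every element having a $p$-th root. Weak inverse: $a^*=a^{-1}$ if $a\ne0$, $0^*=0$; weak $p$-root: $r_p(a)=\sqrt[p]{a}$ if characteristic is $p$, else $0$. An implicitly closed field is a weakly rooted field expanded by $(\,)^*$ and all $r_p$; $\mathsf{ICM}$ is the class of algebras isomorphic to subalgebras of direct products of implicitly closed fields. An implicit operation $f$ of $\mathsf{RCR}$ defined by a formula $\varphi(\vec x,y)$ is a family of partial functions $f^{\mathbf A}$ ($\mathbf A\in\mathsf{RCR}$) with $\mathbf A\models\varphi(\vec a,b)$ iff $\vec a\in\mathrm{dom} f^{\mathbf A}$ and $f^{\mathbf A}(\vec a)=b$. For a set $\mathcal F$ of pp definable extendable implicit operations of a quasivariety $\mathsf K$, $\mathscr L_{\mathcal F}$ adds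 a new $n$-ary symbol for each $n$-ary $f\in\mathcal F$; $\mathsf K[\mathscr L_{\mathcal F}]$ is the class of expansions of those $\mathbf A\in\mathsf K$ in which all $f^{\mathbf A}$ ($f\in\mathcal F$) are total, interpreting the new symbols as $f^{\mathbf A}$; the pp expansion induced by $\mathcal F$ is the class of subalgebras of members of $\mathsf K[\mathscr L_{\mathcal F}]$, and it is simple if it equals $\mathsf K[\mathscr L_{\mathcal F}]$. *)

(* Defs.v *)
From mathcomp Require Import all_boot.

Definition primeIdx := {p : nat | prime p}.

Record LFAlg := {
  car :> Type;
  add : car -> car -> car;
  mul : car -> car -> car;
  opp : car -> car;
  zero : car;
  one : car;
  star : car -> car;
  rt : primeIdx -> car -> car
}.

Section Ops.
Variable A : LFAlg.

Fixpoint natA (n : nat) : A :=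
  match n with 0 => zero A | S m => add A (one A) (natA m) end.

Fixpoint powA (y : A) (n : nat) : A :=
  match n with 0 => one A | S m => mul A y (powA y m) end.

Definition isComRing : Prop :=
  (forall x y z, add A x (add A y z) = add A (add A x y) z) /\
  (forall x y, add A x y = add A y x) /\
  (forall x, add A (zero A) x = x) /\
  (forall x, add A (opp A x) x = zero A) /\
  (forall x y z, mul A x (mul A y z) = mul A (mul A x y) z) /\
  (forall x y, mul A x y = mul A y x) /\
  (forall x, mul A (one A) x = x) /\
  (forall x y z, mul A x (add A y z) = add A (mul A x y) (mul A x z)).

Definition isRCR : Prop :=
  isComRing /\ forall (x : A) (n : nat), powA x n = zero A -> x = zero A.

Definition invF (x y : A) : Prop :=
  mul A (mul A x x) y = x /\ mul A x (mul A y y) = y.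

Definition exrootF (p : nat) (x y : A) : Prop :=
  exists z, invF (natA p) z /\
    powA y p = mul A (add A (one A) (opp A (mul A z (natA p)))) x.

(* Membership in RCR[L_F]: the reduct is in RCR, the implicit operations
   g and f_p are total on it, and the new symbols are interpreted as them:
   A |= phi(a,b) iff the operation at a equals b. *)
Definition inRCR_LF : Prop :=
  isRCR /\
  (forall a b : A, invF a b <-> star A a = b) /\
  (forall (p : primeIdx) (a b : A), exrootF (sval p) a b <-> rt A p a = b).

Definition isField : Prop :=
  isComRing /\ one A <> zero A /\
  forall x : A, x <> zero A -> exists y, mul A x y = one A.

Definition charZero : Prop := forall n, 0 < n -> natA n <> zero A.

Definition charP (p : nat) : Prop := natA p = zero A.

Definition weaklyRooted : Prop :=
  charZero \/
  exists p : primeIdx, charP (sval p) /\ forall a : A, exists b, powA b (sval p) = a.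

Definition isICField : Prop :=
  isField /\ weaklyRooted /\
  (forall a : A, a <> zero A -> mul A a (star A a) = one A) /\
  star A (zero A) = zero A /\
  (forall (p : primeIdx) (a : A),
     (charP (sval p) -> powA (rt A p a) (sval p) = a) /\
     (~ charP (sval p) -> rt A p a = zero A)).

End Ops.

Set Implicit Arguments.
Unset Strict Implicit.
Unset Printing Implicit Defensive.

Definition isHom (A B : LFAlg) (h : A -> B) : Prop :=
  (forall x y, h (add A x y) = add B (h x) (h y)) /\
  (forall x y, h (mul A x y) = mul B (h x) (h y)) /\
  (forall x, h (opp A x) = opp B (h x)) /\
  h (zero A) = zero B /\ h (one A) = one B /\
  (forall x, h (star A x) = star B (h x)) /\
  (forall p x, h (rt A p x) = rt B p (h x)).

Definition isEmb (A B : LFAlg) (h : A -> B) : Prop :=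
  isHom h /\ forall x y, h x = h y -> x = y.

Definition prodLF (I : Type) (F : I -> LFAlg) : LFAlg := {|
  car := forall i, F i;
  add := fun x y i => add (F i) (x i) (y i);
  mul := fun x y i => mul (F i) (x i) (y i);
  opp := fun x i => opp (F i) (x i);
  zero := fun i => zero (F i);
  one := fun i => one (F i);
  star := fun x i => star (F i) (x i);
  rt := fun p x i => rt (F i) p (x i) |}.

(* the pp expansion of RCR induced by F: subalgebras (up to iso) of members
   of RCR[L_F] *)
Definition inPPExp (A : LFAlg) : Prop :=
  exists (B : LFAlg) (h : A -> B), inRCR_LF B /\ isEmb h.

Definition inICM (A : LFAlg) : Prop :=
  exists (I : Type) (F : I -> LFAlg) (h : A -> prodLF F),
    (forall i, isICField (F i)) /\ isEmb h.

(* Main.v *)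
Require Import Defs.
From HB Require Import structures.
From mathcomp Require Import all_boot all_algebra.
From mathcomp Require Import boolp classical_sets.
From mathcomp Require Import ring.
From mathcomp Require Import boolp classical_sets.
Import Defs.
Import GRing.Theory.
Local Open Scope ring_scope.
Definition RC (A : LFAlg) (H : isComRing A) : Type := car A.
Section Inst.
Variables (A : LFAlg) (H : isComRing A).
HB.instance Definition _ := gen_eqMixin (RC A H).
HB.instance Definition _ := gen_choiceMixin (RC A H).
Let aA : forall x y z : RC A H, Defs.add A x (Defs.add A y z) = Defs.add A (Defs.add A x y) z.
Proof. by have [] := H. Qed.
Let aC : forall x y : RC A H, Defs.add A x y = Defs.add A y x.
Proof. by have [] := H=> _ []. Qed.
Let a0 : forall x : RC A H, Defs.add A (Defs.zero A) x = x.
Proof. by have [] := H=> _ [] _ []. Qed.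
Let aN : forall x : RC A H, Defs.add A (Defs.opp A x) x = Defs.zero A.
Proof. by have [] := H=> _ [] _ [] _ []. Qed.
HB.instance Definition _ := GRing.isZmodule.Build (RC A H) aA aC a0 aN.
Let mA : forall x y z : RC A H, Defs.mul A x (Defs.mul A y z) = Defs.mul A (Defs.mul A x y) z.
Proof. by have [] := H=> _ [] _ [] _ [] _ []. Qed.
Let mC : forall x y : RC A H, Defs.mul A x y = Defs.mul A y x.
Proof. by have [] := H=> _ [] _ [] _ [] _ [] _ []. Qed.
Let m1 : forall x : RC A H, Defs.mul A (Defs.one A) x = x.
Proof. by have [] := H=> _ [] _ [] _ [] _ [] _ [] _ []. Qed.
Let mD : forall x y z : RC A H, Defs.mul A (Defs.add A x y) z = Defs.add A (Defs.mul A x z) (Defs.mul A y z).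
Proof. have [] := H=> _ [] _ [] _ [] _ [] _ [] mc [] _ d x y z. by rewrite mc d !(mc z). Qed.
HB.instance Definition _ := GRing.Zmodule_isComPzRing.Build (RC A H) mA mC m1 mD.

Lemma addE (x y : RC A H) : Defs.add A x y = x + y. Proof. by []. Qed.
Lemma mulE (x y : RC A H) : Defs.mul A x y = x * y. Proof. by []. Qed.
Lemma oppE (x : RC A H) : Defs.opp A x = - x. Proof. by []. Qed.
Lemma zeroE : Defs.zero A = 0 :> RC A H. Proof. by []. Qed.
Lemma oneE : Defs.one A = 1 :> RC A H. Proof. by []. Qed.
Lemma natAE n : natA A n = n%:R :> RC A H.
Proof. by elim: n => //= n IH; rewrite mulrS IH. Qed.
Lemma powAE (x : RC A H) n : powA A x n = x ^+ n.
Proof. by elim: n => //= n IH; rewrite exprS IH. Qed.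
End Inst.
Arguments addE {A} H. Arguments mulE {A} H. Arguments oppE {A} H. Arguments zeroE {A} H. Arguments oneE {A} H. Arguments natAE {A} H. Arguments powAE {A} H.

Ltac toRC H := rewrite ?(addE H) ?(mulE H) ?(oppE H) ?(zeroE H) ?(oneE H) ?(natAE H) ?(powAE H).

Definition RCnz (A : LFAlg) (H : isComRing A) (Hnz : Defs.one A <> Defs.zero A) : Type := RC A H.
HB.instance Definition _ A H Hnz := GRing.ComPzRing.copy (@RCnz A H Hnz) (RC A H).
Lemma RCnz_neq A H Hnz : (1 : @RCnz A H Hnz) != 0.
Proof. by apply/eqP. Qed.
HB.instance Definition _ A H Hnz := GRing.PzSemiRing_isNonZero.Build (@RCnz A H Hnz) (@RCnz_neq A H Hnz).

Lemma frob_inj (A : LFAlg) (H : isComRing A)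
  (red : forall (x : A) n, powA A x n = Defs.zero A -> x = Defs.zero A) p :
  prime p -> natA A p = Defs.zero A -> forall x y : A, powA A x p = powA A y p -> x = y.
Proof.
move=> pp np.
suff S : forall x y : RC A H, powA A x p = powA A y p -> x = y by [].
move=> x y exy.
have [h10|hnz] := EM (Defs.one A = Defs.zero A).
  have z : forall u : RC A H, u = 0.
    by move=> u; rewrite -[u]mul1r -(oneE H) h10 (zeroE H) mul0r.
  by rewrite (z x) (z y).
pose T := @RCnz A H hnz.
have cp : p \in [pchar T].
  by apply/andP; split => //; apply/eqP; rewrite -(natAE H) np.
have := @pFrobenius_autB_comm T p cp x y (mulrC _ _).
rewrite !pFrobenius_autE.
move=> e.
have : powA A (x - y) p = Defs.zero A.
  rewrite (powAE H); change ((x - y : T) ^+ p = 0); rewrite e.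
  by change (x ^+ p - y ^+ p = 0); rewrite -!(powAE H) exy subrr.
move/red; rewrite (zeroE H). move=> h. exact: (@subr0_eq (RC A H) x y h).
Qed.
Section Transfer.
Variables (A B : LFAlg) (h : A -> B) (hh : isHom h).

Lemma hadd x y : h (Defs.add A x y) = Defs.add B (h x) (h y). Proof. by case: hh. Qed.
Lemma hmul x y : h (Defs.mul A x y) = Defs.mul B (h x) (h y). Proof. by case: hh => _ []. Qed.
Lemma hopp x : h (Defs.opp A x) = Defs.opp B (h x). Proof. by case: hh => _ [] _ []. Qed.
Lemma h0 : h (Defs.zero A) = Defs.zero B. Proof. by case: hh => _ [] _ [] _ []. Qed.
Lemma h1 : h (Defs.one A) = Defs.one B. Proof. by case: hh => _ [] _ [] _ [] _ []. Qed.
Lemma hstar x : h (star A x) = star B (h x). Proof. by case: hh => _ [] _ [] _ [] _ [] _ []. Qed.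
Lemma hrt p x : h (rt A p x) = rt B p (h x). Proof. by case: hh => _ [] _ [] _ [] _ [] _ [] _. Qed.
Lemma hnat n : h (natA A n) = natA B n.
Proof. by elim: n => [|n IH] /=; rewrite ?h0 // hadd h1 IH. Qed.
Lemma hpow x n : h (powA A x n) = powA B (h x) n.
Proof. by elim: n => [|n IH] /=; rewrite ?h1 // hmul IH. Qed.
Lemma inv_push a b : invF A a b -> invF B (h a) (h b).
Proof. by case=> e1 e2; split; rewrite -!hmul ?e1 ?e2. Qed.

Hypothesis inj : forall x y, h x = h y -> x = y.
Lemma inv_pull a b : invF B (h a) (h b) -> invF A a b.
Proof. by case=> e1 e2; split; apply: inj; rewrite !hmul. Qed.

Lemma emb_transfer : inRCR_LF B -> inRCR_LF A.
Proof.
move=> [[[bA [bC [b0 [bN [mA [mC [m1 mD]]]]]]] bred] [bstar brt]].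
split; [split|split].
- do ![split] => *; apply: inj; do 3!rewrite ?hadd ?hmul ?hopp ?h0 ?h1;
  first [exact: bA | exact: bC | exact: b0 | exact: bN | exact: mA | exact: mC | exact: m1 | exact: mD].
- move=> x n e; apply: inj; rewrite h0; apply: (bred _ n); by rewrite -hpow e h0.
- move=> a b; split.
    by move/inv_push => /bstar; rewrite -hstar => /inj.
  by move=> e; apply: inv_pull; apply/bstar; rewrite -hstar e.
- move=> p a b; split.
    move=> [z [zi ze]]; apply: inj; rewrite hrt; apply/brt.
    exists (h z); split; first by rewrite -hnat; apply: inv_push.
    by rewrite -hpow ze hmul hadd h1 hopp hmul hnat.
  move=> e.
  have : exrootF B (sval p) (h a) (h b) by apply/brt; rewrite -hrt e.
  case=> z [zi ze].
  have zs : star B (natA B (sval p)) = z by apply/bstar.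
  exists (star A (natA A (sval p))); split.
    by apply: inv_pull; rewrite hstar hnat; apply/bstar.
  by apply: inj; rewrite hpow hmul hadd h1 hopp hmul hstar hnat zs.
Qed.
End Transfer.

Section ICF.
Variables (F : LFAlg) (HF : isICField F).
Let HC : isComRing F := proj1 (proj1 HF).
Let T := RC F HC.
Let Hnz : Defs.one F <> Defs.zero F := proj1 (proj2 (proj1 HF)).
Let Hinv : forall x : F, x <> Defs.zero F -> exists y, Defs.mul F x y = Defs.one F
  := proj2 (proj2 (proj1 HF)).
Let Hs : forall a : F, a <> Defs.zero F -> Defs.mul F a (star F a) = Defs.one F
  := proj1 (proj2 (proj2 HF)).
Let Hs0 : star F (Defs.zero F) = Defs.zero F := proj1 (proj2 (proj2 (proj2 HF))).
Let Hr := proj2 (proj2 (proj2 (proj2 HF))).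

Lemma icf_red (x : F) n : powA F x n = Defs.zero F -> x = Defs.zero F.
Proof.
elim: n => [|n IH] /=; first by move=> e; case: Hnz.
move=> e; have [->|nx] := EM (x = Defs.zero F) => //.
have [y xy] := Hinv _ nx; apply: IH.
move: e xy; toRC HC => e xy.
change T in x; change T in y.
have -> : x ^+ n = y * (x * x ^+ n) by rewrite mulrA (mulrC y) xy mul1r.
by rewrite e mulr0.
Qed.

Lemma icf_inv (a b : F) : invF F a b <-> star F a = b.
Proof.
have [->|na] := EM (a = Defs.zero F).
  rewrite Hs0 /invF; toRC HC; rewrite !mul0r; split; first by case=> _ <-.
  by move=> <-.
move: (Hs _ na); rewrite /invF; move: (star F a) => s.
change T in a; change T in b; change T in s.
toRC HC => as1.
split.
  case=> e1 _.
  have : b * (a * s) ^+ 2 = (a * a * b) * s * s by ring.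
  by rewrite as1 e1 expr1n mulr1 -mulrA (mulrA a) as1 mul1r.
move=> <-; split.
  by rewrite -mulrA as1 mulr1.
by rewrite mulrA as1 mul1r.
Qed.

Lemma icf_RCR : inRCR_LF F.
Proof.
split; first by split; [exact: HC | exact: icf_red].
split; first exact: icf_inv.
move=> p a b; have pp := svalP p.
have p0 : (sval p != 0)%N by rewrite -lt0n prime_gt0.
have [cp|ncp] := EM (charP F (sval p)).
  have zinv : forall z, invF F (natA F (sval p)) z <-> z = Defs.zero F.
    by move=> z; rewrite icf_inv cp Hs0; split.
  have rp := (proj1 (Hr p a)) cp.
  rewrite /exrootF; split.
    case=> z [/zinv -> ze]; apply: (@frob_inj F HC icf_red _ pp cp).
    by rewrite rp ze; toRC HC; rewrite !mul0r subr0 mul1r.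
  move=> <-; exists (Defs.zero F); split; first exact/zinv.
  by rewrite rp; toRC HC; rewrite !mul0r subr0 mul1r.
have rp := (proj2 (Hr p a)) ncp.
have nn : natA F (sval p) <> Defs.zero F by [].
have ns := Hs _ nn.
rewrite /exrootF rp; split.
  case=> z [/icf_inv zs ze]; move: ze; rewrite -zs; move: ns; toRC HC => ns.
  rewrite [X in 1 - X]mulrC ns subrr mul0r => e.
  by apply/esym; apply: (icf_red _ (sval p)); toRC HC.
move=> <-; exists (star F (natA F (sval p))); split; first exact/icf_inv.
move: ns; toRC HC => ns; rewrite [X in 1 - X]mulrC ns subrr mul0r.
by rewrite expr0n (negbTE p0).
Qed.
End ICF.

Lemma capp {J : Type} {T : J -> Type} (f g : forall i, T i) : f = g -> forall i, f i = g i.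
Proof. by move=> ->. Qed.

Section Prod.
Variables (I : Type) (F : I -> LFAlg) (HF : forall i, inRCR_LF (F i)).

Lemma fext (x y : prodLF F) : (forall i, x i = y i) -> x = y.
Proof. exact: functional_extensionality_dep. Qed.

Lemma pcapp {x y : prodLF F} : x = y -> forall i, x i = y i.
Proof. by move=> ->. Qed.

Lemma prod_nat n : natA (prodLF F) n = fun i => natA (F i) n.
Proof. by elim: n => [|n IH] //=; rewrite IH. Qed.
Lemma prod_pow x n : powA (prodLF F) x n = fun i => powA (F i) (x i) n.
Proof. by elim: n => [|n IH] //=; rewrite IH. Qed.

Lemma exroot_std (B : LFAlg) (HB : inRCR_LF B) p a b :
  exrootF B p a b ->
  invF B (natA B p) (star B (natA B p)) /\
  powA B b p = Defs.mul B (Defs.add B (Defs.one B)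
      (Defs.opp B (Defs.mul B (star B (natA B p)) (natA B p)))) a.
Proof.
case=> z [zi ze]; have zs := (proj1 (proj1 (proj2 HB) _ _)) zi.
by rewrite zs.
Qed.

Lemma prod_RCR : inRCR_LF (prodLF F).
Proof.
have HC i := proj1 (proj1 (HF i)).
split; [split|split].
- do ![split] => *; apply: fext => i /=;
  have [bA [bC [b0 [bN [mA [mC [m1 mD]]]]]]] := HC i;
  first [exact: bA | exact: bC | exact: b0 | exact: bN | exact: mA | exact: mC | exact: m1 | exact: mD].
- move=> x n; rewrite prod_pow => e; apply: fext => i.
  apply: (proj2 (proj1 (HF i)) _ n); by have := pcapp e i.
- move=> a b; split.
    case=> e1 e2; apply: fext => i; apply/(proj1 (proj2 (HF i))).
    by split; [by have := pcapp e1 i | by have := pcapp e2 i].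
  move=> e; split; apply: fext => i;
  have [] := (proj2 (proj1 (proj2 (HF i)) _ _)) (pcapp e i) => //.
- move=> p a b; split.
    case=> z [[z1 z2] ze]; apply: fext => i; apply/(proj2 (proj2 (HF i))).
    exists (z i); split; first split.
    + by have := pcapp z1 i; rewrite prod_nat.
    + by have := pcapp z2 i; rewrite prod_nat.
    + by have := pcapp ze i; rewrite prod_nat prod_pow.
  move=> e.
  have E i : exrootF (F i) (sval p) (a i) (b i).
    by apply/(proj2 (proj2 (HF i))); rewrite -e.
  exists (star (prodLF F) (natA (prodLF F) (sval p))); rewrite prod_nat prod_pow.
  split; first split.
  + by apply: fext => i; have [[]] := exroot_std _ (HF i) _ _ _ (E i).
  + by apply: fext => i; have [[]] := exroot_std _ (HF i) _ _ _ (E i).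
  + by apply: fext => i; have [] := exroot_std _ (HF i) _ _ _ (E i).
Qed.
End Prod.

Lemma ICM_RCR (A : LFAlg) : inICM A -> inRCR_LF A.
Proof.
case=> I [F [h [HF [hh inj]]]].
apply: (@emb_transfer _ _ h hh inj); apply: prod_RCR => i; exact: icf_RCR.
Qed.

Lemma PP_iff (A : LFAlg) : inPPExp A <-> inRCR_LF A.
Proof.
split.
  by case=> B [h [HB [hh inj]]]; exact: (@emb_transfer _ _ h hh inj).
move=> HA; exists A, id; split => //; split => //.
Qed.

Lemma NNPP (P : Prop) : ~ ~ P -> P.
Proof. by move=> nnP; have [//|nP] := EM P; case: nnP. Qed.

Definition sT (R : LFAlg) (HC : isComRing R) (a : RC R HC) : RC R HC := star R a.
Arguments sT {R HC}.

Record isMax (R : LFAlg) (HC : isComRing R) (J : RC R HC -> Prop) : Prop := {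
  J0 : J 0;
  JD : forall x y, J x -> J y -> J (x + y);
  JM : forall r x, J x -> J (r * x);
  J1 : ~ J 1;
  JS : forall x : RC R HC, ~ J x -> J (1 - x * sT x) }.

Arguments isMax {R} HC J.

Section Max.
Variables (R : LFAlg) (HR : inRCR_LF R).
Let HC : isComRing R := proj1 (proj1 HR).
Let T := RC R HC.

Lemma Rstar1 (a : T) : a * a * sT a = a.
Proof. by have [] := (proj2 (proj1 (proj2 HR) a (star R a))) erefl. Qed.
Lemma Rstar2 (a : T) : a * (sT a * sT a) = sT a.
Proof. by have [] := (proj2 (proj1 (proj2 HR) a (star R a))) erefl. Qed.

Lemma exists_max (d : T) : d <> 0 -> exists J, isMax HC J /\ ~ J d.
Proof.
move=> dn0.
pose e : T := d * sT d.
have ee : e * e = e.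
  by rewrite /e -mulrA (mulrC (sT d)) !mulrA Rstar1.
have en0 : e <> 0.
  move=> e0; apply: dn0; rewrite -(Rstar1 d) -mulrA.
  by have -> : d * sT d = e by []; rewrite e0 mulr0.
pose P (X : T -> Prop) := [/\ (forall x y, X x -> X y -> X (x + y)),
                            (forall r x, X x -> X (r * x)) & ~ X e].
have [A [[AD AM Ae] Amax]] : exists A, P A /\ forall B, proper A B -> ~ P B.
  apply: Zorn_bigcup => F FP Ftot; split.
  - move=> x y [X FX Xx] [Y FY Yy].
    have [XY|YX] := Ftot X Y FX FY.
      by exists Y => //; have [D _ _] := FP Y FY; apply: D => //; exact: XY.
    by exists X => //; have [D _ _] := FP X FX; apply: D => //; exact: YX.
  - by move=> r x [X FX Xx]; exists X => //; have [_ M _] := FP X FX; exact: M.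
  - by case=> X FX Xe; have [_ _ ] := FP X FX; apply.
have A0 : A 0.
  apply: NNPP => nA0.
  apply: (Amax (fun x => A x \/ x = 0)).
    split; first by move=> x Ax; left.
    by move=> H; apply: nA0; apply: H; right.
  split.
  - move=> x y [Ax|->] [Ay|->]; rewrite ?add0r ?addr0; by [left; apply: AD|left|left|right].
  - move=> r x [Ax|->]; [left; exact: AM | right; exact: mulr0].
  - by case.
have gen x : ~ A x -> exists a r, A a /\ e = a + r * x.
  move=> nAx; apply: NNPP => ne.
  apply: (Amax (fun y => exists a r, A a /\ y = a + r * x)).
    split; first by move=> y Ay; exists y, 0; rewrite mul0r addr0.
    by move=> H; apply: nAx; apply: H; exists 0, 1; rewrite mul1r add0r.
  split.
  - move=> y z [a [r [Aa ->]]] [b [t [Ab ->]]]; exists (a + b), (r + t); split; first exact: AD.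
    by ring.
  - move=> s y [a [r [Aa ->]]]; exists (s * a), (s * r); split; first exact: AM.
    by ring.
  - case=> a [r [Aa ee']]; apply: ne; by exists a, r.
exists A; split; last first.
  by move=> Ad; apply: Ae; rewrite /e mulrC; exact: AM.
split => //.
- by move=> A1; apply: Ae; rewrite -(mulr1 e); exact: AM.
- move=> x nAx; apply: NNPP => nf.
  have [a [r [Aa ea]]] := gen x nAx.
  have [b [t [Ab eb]]] := gen _ nf.
  have x0 : x * (1 - x * sT x) = 0.
    by rewrite mulrBr mulr1 mulrA Rstar1 subrr.
  apply: Ae; rewrite -ee.
  have -> : e * e = (b + t * (1 - x * sT x)) * a + (r * x) * b
                    + (r * t) * (x * (1 - x * sT x)).
    by rewrite {1}ea {1}eb; ring.
  rewrite x0 mulr0 addr0; apply: AD; apply: AM => //.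
Qed.
End Max.

Definition rtT (R : LFAlg) (HC : isComRing R) p (a : RC R HC) : RC R HC := rt R p a.
Arguments rtT {R HC}.

Section Quot.
Variables (R : LFAlg) (HR : inRCR_LF R).
Let HC : isComRing R := proj1 (proj1 HR).
Let T := RC R HC.
Variable J : T -> Prop.
Hypothesis HJ : isMax HC J.

Let J0 := @J0 _ _ _ HJ.
Let JD := @JD _ _ _ HJ.
Let JM := @JM _ _ _ HJ.
Let J1 := @J1 _ _ _ HJ.
Let JS := @JS _ _ _ HJ.

Lemma JB (x y : T) : J x -> J y -> J (x - y).
Proof. move=> Jx Jy; rewrite -mulN1r; apply: JD => //; exact: JM. Qed.

Lemma Jprime (x y : T) : J (x * y) -> ~ J x -> J y.
Proof.
move=> Jxy nJx.
have -> : y = y * (1 - x * sT x) + sT x * (x * y) by ring.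
by apply: JD; apply: JM => //; exact: JS.
Qed.

Lemma Jpow (x : T) n : J (x ^+ n) -> J x.
Proof.
elim: n => [|n IH]; first by rewrite expr0 => /J1.
rewrite exprS => Jx; have [//|nJ] := EM (J x).
by apply: IH; exact: (Jprime _ _ Jx nJ).
Qed.

Definition cls (a : T) : T -> Prop := fun x => J (x - a).
Definition Q := {C : T -> Prop | exists a, C = cls a}.
Definition mk (a : T) : Q := exist _ (cls a) (ex_intro _ a erefl).
Definition rep (C : Q) : T := sval (cid (svalP C)).
Lemma rep_spec C : sval C = cls (rep C).
Proof. exact: (svalP (cid (svalP C))). Qed.

Lemma mk_eq a b : mk a = mk b <-> J (a - b).
Proof.
split.
  move/(congr1 sval) => /= e.
  have : cls a a by rewrite /cls subrr.
  by rewrite e.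
move=> Jab; apply: eq_exist; apply: funext => x; apply: propext; rewrite /cls; split => h.
  have -> : x - b = (x - a) + (a - b) by ring.
  by apply: JD.
have -> : x - a = (x - b) - (a - b) by ring.
  by apply: JB.
Qed.

Lemma mk_rep C : mk (rep C) = C.
Proof.
have := rep_spec C; case: C => c pc /= e.
by apply: eq_exist; exact: esym e.
Qed.

Lemma Qind (P : Q -> Prop) : (forall a, P (mk a)) -> forall C, P C.
Proof. by move=> h C; rewrite -(mk_rep C). Qed.

Lemma rep_mk a : J (rep (mk a) - a).
Proof. by apply/mk_eq; rewrite mk_rep. Qed.

Lemma mk0 a : mk a = mk 0 <-> J a.
Proof. by rewrite mk_eq subr0. Qed.

Lemma Jstar (a b : T) : J (a - b) -> J (sT a - sT b).
Proof.
move=> Jab.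
have [Ja|nJa] := EM (J a).
  have Jb : J b.
    have -> : b = a - (a - b) by ring.
  by apply: JB.
  apply: JB; [rewrite -(Rstar2 _ HR a) | rewrite -(Rstar2 _ HR b)]; 
  by rewrite mulrC; apply: JM.
have nJb : ~ J b.
  move=> Jb; apply: nJa; have -> : a = (a - b) + b by ring.
  by apply: JD.
have Sa := JS _ nJa; have Sb := JS _ nJb.
have -> : sT a - sT b = sT a * (1 - b * sT b) - sT b * (1 - a * sT a)
                          + (- (sT a * sT b)) * (a - b) by ring.
by apply: JD; [apply: JB|]; apply: JM.
Qed.

Definition qadd := locked (fun C D : Q => mk (rep C + rep D)).
Definition qmul := locked (fun C D : Q => mk (rep C * rep D)).
Definition qopp := locked (fun C : Q => mk (- rep C)).
Definition QA : LFAlg := {|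
  car := Q;
  add := qadd;
  mul := qmul;
  opp := qopp;
  zero := mk 0;
  one := mk 1;
  star := fun C => mk (sT (rep C));
  rt := fun p C => mk (rtT p (rep C)) |}.

Lemma addQ a b : Defs.add QA (mk a) (mk b) = mk (a + b).
Proof.
rewrite /= /qadd -lock; apply/mk_eq.
have -> : rep (mk a) + rep (mk b) - (a + b) = (rep (mk a) - a) + (rep (mk b) - b) by ring.
by apply: JD; apply: rep_mk.
Qed.
Lemma mulQ a b : Defs.mul QA (mk a) (mk b) = mk (a * b).
Proof.
rewrite /= /qmul -lock; apply/mk_eq.
have -> : rep (mk a) * rep (mk b) - a * b =
   rep (mk b) * (rep (mk a) - a) + a * (rep (mk b) - b) by ring.
by apply: JD; apply: JM; apply: rep_mk.
Qed.
Lemma oppQ a : Defs.opp QA (mk a) = mk (- a).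
Proof.
rewrite /= /qopp -lock; apply/mk_eq.
have -> : - rep (mk a) - - a = (-1) * (rep (mk a) - a) by ring.
by apply: JM; apply: rep_mk.
Qed.
Lemma starQ a : star QA (mk a) = mk (sT a).
Proof. by apply/mk_eq; apply: Jstar; apply: rep_mk. Qed.

Lemma QA_com : isComRing QA.
Proof.
do ![split]; do ?[elim/Qind=> ?]; do 3!rewrite ?addQ ?mulQ ?oppQ;
  congr mk; ring.
Qed.

Lemma natQ n : natA QA n = mk n%:R.
Proof.
elim: n => [|n IH]; first by [].
have -> : natA QA n.+1 = Defs.add QA (Defs.one QA) (natA QA n) by [].
by rewrite IH addQ mulrS.
Qed.
Lemma powQ a n : powA QA (mk a) n = mk (a ^+ n).
Proof.
elim: n => [|n IH]; first by [].
have -> : powA QA (mk a) n.+1 = Defs.mul QA (mk a) (powA QA (mk a) n) by [].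
by rewrite IH mulQ exprS.
Qed.

Lemma QA_red (x : QA) n : powA QA x n = Defs.zero QA -> x = Defs.zero QA.
Proof.
elim/Qind: x => a; rewrite powQ => /mk0 Ja; apply/mk0; exact: (Jpow _ _ Ja).
Qed.

Lemma Rrt p (a : T) :
  @rtT R HC p a ^+ sval p = (1 - @sT R HC (sval p)%:R * (sval p)%:R) * a.
Proof.
have E : exrootF R (sval p) a (rt R p a) by apply/(proj2 (proj2 HR)).
have [_] := exroot_std _ HR _ _ _ E.
by rewrite (powAE HC) (mulE HC) (addE HC) (oneE HC) (oppE HC) (mulE HC) !(natAE HC).
Qed.

Lemma Jsn (p : primeIdx) : J ((sval p)%:R) -> J (sT ((sval p)%:R : T)).
Proof. by move=> Jn; rewrite -(Rstar2 _ HR) mulrC; apply: JM. Qed.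

Lemma rt_char (p : primeIdx) (a : T) : J ((sval p)%:R) -> mk (rtT p a ^+ sval p) = mk a.
Proof.
move=> Jn; apply/mk_eq; rewrite Rrt.
have -> : (1 - sT ((sval p)%:R : T) * (sval p)%:R) * a - a
   = (- ((sval p)%:R * a)) * sT ((sval p)%:R : T) by ring.
by apply: JM; apply: Jsn.
Qed.

Lemma rt_nchar (p : primeIdx) (a : T) : ~ J ((sval p)%:R) -> J (rtT p a).
Proof.
move=> nJ; apply: (@Jpow _ (sval p)); rewrite Rrt mulrC (mulrC (sT _)).
by apply: JM; apply: JS.
Qed.

Lemma Jrt p (a b : T) : J (a - b) -> J (rtT p a - rtT p b).
Proof.
move=> Jab.
have [Jn|nJ] := EM (J ((sval p)%:R : T)); last first.
  by apply: JB; apply: rt_nchar.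
apply/mk_eq.
apply: (@frob_inj QA QA_com QA_red (sval p) (svalP p)).
  by rewrite natQ; apply/mk0.
rewrite !powQ !rt_char //; exact/mk_eq.
Qed.

Lemma rtQ p a : rt QA p (mk a) = mk (rtT p a).
Proof. by apply/mk_eq; apply: Jrt; apply: rep_mk. Qed.

Lemma charJ : (forall m, (0 < m)%N -> ~ J (m%:R : T)) \/
              exists p : primeIdx, J ((sval p)%:R : T).
Proof.
have [H|H] := EM (exists m, (0 < m)%N /\ J (m%:R : T)); last first.
  by left => m m0 Jm; apply: H; exists m.
right.
suff [p [pp Jp]] : exists p, prime p /\ J (p%:R : T).
  by exists (exist _ p pp).
case: H => m0 [m00 Jm0].
suff S : forall k m, (m <= k)%N -> (0 < m)%N -> J (m%:R : T) ->
    exists p, prime p /\ J (p%:R : T) by exact: (S m0 m0).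
elim=> [|k IH] m mk m1 Jm.
  by move: mk m1 Jm; case: m.
have [pm|npm] := boolP (prime m); first by exists m.
have m2 : (1 < m)%N.
  by case: m mk m1 Jm npm => [|[|m]] //= _ _; rewrite /= => /J1.
have pp := pdiv_prime m2.
have dv := pdiv_dvd m.
have [Jp|nJp] := EM (J ((pdiv m)%:R : T)); first by exists (pdiv m).
apply: (IH (m %/ pdiv m)%N).
- rewrite -ltnS; apply: leq_trans mk; apply: ltn_Pdiv => //; exact: prime_gt1.
- by rewrite divn_gt0 ?prime_gt0 // dvdn_leq // ltnW.
- apply: (Jprime _ _ _ nJp); rewrite -natrM mulnC divnK //.
Qed.

Lemma QA_IC : isICField QA.
Proof.
have nz : forall a, ~ J a -> mk a <> Defs.zero QA by move=> a nJ /mk0.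
split; [split; [exact: QA_com|split]|split].
- by move=> /mk0; apply: J1.
- elim/Qind=> a ne; exists (mk (sT a)); rewrite mulQ; apply/mk_eq.
  have nJ : ~ J a by move=> Ja; apply: ne; apply/mk0.
  have -> : a * sT a - 1 = (-1) * (1 - a * sT a) by ring.
  by apply: JM; apply: JS.
- case: charJ => [c0|[p Jp]].
    by left => m m0; rewrite natQ => /mk0; apply: c0.
  right; exists p; split; first by rewrite /charP natQ; apply/mk0.
  elim/Qind=> a; exists (mk (rtT p a)); rewrite powQ; exact: rt_char.
split.
  elim/Qind=> a ne; rewrite starQ mulQ; apply/mk_eq.
  have nJ : ~ J a by move=> Ja; apply: ne; apply/mk0.
  have -> : a * sT a - 1 = (-1) * (1 - a * sT a) by ring.
  by apply: JM; apply: JS.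
split.
  rewrite (starQ 0); apply/mk0.
  by rewrite -(Rstar2 _ HR 0) mul0r; exact: J0.
move=> p; elim/Qind=> a; rewrite rtQ; split.
  by rewrite /charP natQ => /mk0 Jn; rewrite powQ; apply: rt_char.
by rewrite /charP natQ => nc; apply/mk0; apply: rt_nchar => Jn; apply: nc; apply/mk0.
Qed.
End Quot.

Lemma RCR_ICM (A : LFAlg) (HA : inRCR_LF A) : inICM A.
Proof.
pose HC : isComRing A := proj1 (proj1 HA).
pose I := {J : RC A HC -> Prop | isMax HC J}.
pose F (i : I) : LFAlg := QA _ HA (sval i).
pose h (a : A) : prodLF F := fun i => mk _ HA (sval i) a.
exists I, F, h; split; first by move=> i; exact: (QA_IC _ _ _ (svalP i)).
split.
  do ![split].
  - move=> x y; apply: functional_extensionality_dep => i; exact: (esym (addQ _ _ _ (svalP i) x y)).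
  - move=> x y; apply: functional_extensionality_dep => i; exact: (esym (mulQ _ _ _ (svalP i) x y)).
  - move=> x; apply: functional_extensionality_dep => i; exact: (esym (oppQ _ _ _ (svalP i) x)).
  - move=> x; apply: functional_extensionality_dep => i; exact: (esym (starQ _ _ _ (svalP i) x)).
  - move=> p x; apply: functional_extensionality_dep => i; exact: (esym (rtQ _ _ _ (svalP i) p x)).
move=> x y e; apply: NNPP => ne.
change (RC A HC) in x; change (RC A HC) in y.
have dn : x - y <> 0.
  by move=> d0; apply: ne; exact: (@subr0_eq (RC A HC) x y d0).
have [J [HJ nJ]] := exists_max _ HA _ dn.
have : h x (exist _ J HJ) = h y (exist _ J HJ) by rewrite e.
by move/(mk_eq _ _ _ HJ).
Qed.

Theorem mainTheorem15 :
  (forall A : LFAlg, inPPExp A <-> inRCR_LF A) /\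
  (forall A : LFAlg, inICM A <-> inRCR_LF A).
Proof.
split; first exact: PP_iff.
move=> A; split; [exact: ICM_RCR | exact: RCR_ICM].
Qed.
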